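(* Let $C$ be a small category, $T$ an object of $C$, and let $\xi_*,\xi'_*:(X,f)\to(Y,g)$ be morphisms of the left fiber $(\Delta/C)/T$ such that $\xi_*\sim\xi'_*$ as morphisms of $\Delta/C$. Then $r(\xi_* )\sim r(\xi'_* )$.
   Context: For $q\ge0$, $[q]=\{0<\dots<q\}$. A $q$-simplex of the nerve $NC$ is a functor $X:[q]\to C$, i.e. a chain $X_0\to\dots\to X_q$; $q_X=q$; $X(i\to j)$ is the composite $X_i\to X_j$. $\Delta/C$ has all simplices as objects and as morphisms $X\to Y$ the order-preserving $\xi:[q_X]\to[q_Y]$ with $Y\circ\xi=X$, written $\xi_*$. For a $q$-simplex $X$ and surjective order-preserving $s:[q+1]\to[q]$ with order-preserving right inverses $d,d'$, $d_*,d'_*:X\to X\circ s$ are elementary equivalent; $\sim$ is the smallest equivalence relation on morphisms of $\Delta/C$ (with same source and target) compatible with composition containing all elementary equivalent pairs. $\sup:\Delta/C\to C$ sends $X$ to $X_{q_X}$ and $\xi_*:X\to Y$ to $Y(\xi(q_X)\to q_Y)$. The left fiber $(\Delta/C)/T$ has objects pairs $(X,f)$ with $f:X_{q_X}\to T$, and morphisms $(X,f)\to(Y,g)$ the morphisms $\xi_*:X\to Y$ of $\Delta/C$ with $g\circ\sup(\xi_* )=f$. For an object $(X,f)$, $r(X,f)$ is the $(q_X+1)$-simplex $X_0\to\dots\to X_{q_X}\xrightarrow{f}T$. For a morphism $\xi_*:(X,f)\to(Y,g)$, $r(\xi_* ):r(X,f)\to r(Y,g)$ is the morphism of $\Delta/C$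 given by the order-preserving map $[q_X+1]\to[q_Y+1]$ sending $j\mapsto\xi(j)$ for $0\le j\le q_X$ and $q_X+1\mapsto q_Y+1$. *)

(* Defs.v *)
From mathcomp Require Import all_boot.
Set Implicit Arguments. Unset Strict Implicit. Unset Printing Implicit Defensive.

(* A (small) category, in the single-sorted presentation:
   objects Ob, arrows Arr with dom/cod, identities and composition
   [comp g f] = g o f (meaningful when cod f = dom g). *)
Record category := Category {
  Ob : Type;
  Arr : Type;
  dom : Arr -> Ob;
  cod : Arr -> Ob;
  idC : Ob -> Arr;
  comp : Arr -> Arr -> Arr;
  dom_id : forall a, dom (idC a) = a;
  cod_id : forall a, cod (idC a) = a;
  dom_comp : forall f g, cod f = dom g -> dom (comp g f) = dom f;
  cod_comp : forall f g, cod f = dom g -> cod (comp g f) = cod g;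
  comp_id_l : forall f, comp (idC (cod f)) f = f;
  comp_id_r : forall f, comp f (idC (dom f)) = f;
  comp_assoc : forall f g h, cod f = dom g -> cod g = dom h ->
    comp h (comp g f) = comp (comp h g) f }.
Arguments dom {c}. Arguments cod {c}. Arguments idC {c}. Arguments comp {c}.

Section Nerve.
Variable C : category.

(* A q-simplex of NC: a chain X_0 -> X_1 -> ... -> X_q
   (objects sob i, i <= q, and arrows sst i : X_i -> X_{i+1}, i < q). *)
Record simplex := Simplex {
  sq : nat;
  sob : 'I_sq.+1 -> Ob C;
  sst : 'I_sq -> Arr C }.
Arguments sob : clear implicits.
Arguments sst : clear implicits.

Definition is_simplex (X : simplex) : Prop :=
  forall i : 'I_(sq X),
    dom (sst X i) = sob X (widen_ord (leqnSn _) i) /\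
    cod (sst X i) = sob X (lift ord0 i).

(* nat-indexed access (default values outside the range are irrelevant) *)
Definition obn (X : simplex) (k : nat) : Ob C :=
  if (insub k : option 'I_(sq X).+1) is Some i then sob X i else sob X ord0.
Definition stn (X : simplex) (k : nat) : Arr C :=
  if (insub k : option 'I_(sq X)) is Some i then sst X i else idC (obn X k).

Fixpoint homn (X : simplex) (i n : nat) : Arr C :=
  match n with
  | 0 => idC (obn X i)
  | n'.+1 => comp (stn X (i + n')) (homn X i n')
  end.

(* X(i -> j) for i <= j *)
Definition hom (X : simplex) (i j : nat) : Arr C := homn X i (j - i).

Definition smap (X Y : simplex) := {ffun 'I_(sq X).+1 -> 'I_(sq Y).+1}.

Definition monotone m n (h : 'I_m -> 'I_n) : Prop :=
  forall i j : 'I_m, i <= j -> h i <= h j.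

(* xi is a morphism X -> Y of Delta/C : order preserving with Y o xi = X *)
Definition is_mor (X Y : simplex) (xi : smap X Y) : Prop :=
  monotone xi /\
  (forall i, sob Y (xi i) = sob X i) /\
  (forall i j : 'I_(sq X).+1, i <= j -> hom Y (xi i) (xi j) = hom X i j).

Definition mcomp (X Y Z : simplex) (eta : smap Y Z) (xi : smap X Y) : smap X Z :=
  [ffun i => eta (xi i)].

(* X o s, for s : [q+1] -> [q] *)
Definition precomp (X : simplex) (s : {ffun 'I_(sq X).+2 -> 'I_(sq X).+1}) :
  simplex :=
  @Simplex (sq X).+1 (fun i => sob X (s i))
    (fun i : 'I_(sq X).+1 =>
       hom X (s (widen_ord (leqnSn _) i)) (s (lift ord0 i))).

Arguments precomp : clear implicits.

(* The equivalence relation ~ on morphisms of Delta/C: the smallest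
   equivalence relation on parallel morphisms, compatible with composition,
   containing all elementary equivalent pairs. *)
Inductive sim : forall X Y : simplex, smap X Y -> smap X Y -> Prop :=
| sim_elem (X : simplex) (s : {ffun 'I_(sq X).+2 -> 'I_(sq X).+1})
    (d d' : smap X (precomp X s)) :
    is_simplex X -> monotone s -> (forall j, exists i, s i = j) ->
    monotone d -> monotone d' ->
    (forall j, s (d j) = j) -> (forall j, s (d' j) = j) ->
    sim d d'
| sim_refl (X Y : simplex) (xi : smap X Y) :
    is_simplex X -> is_simplex Y -> is_mor xi -> sim xi xi
| sim_sym (X Y : simplex) (xi xi' : smap X Y) : sim xi xi' -> sim xi' xi
| sim_trans (X Y : simplex) (xi xi' xi'' : smap X Y) :
    sim xi xi' -> sim xi' xi'' -> sim xi xi''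
| sim_comp (X Y Z : simplex) (xi xi' : smap X Y) (eta eta' : smap Y Z) :
    sim xi xi' -> sim eta eta' -> sim (mcomp eta xi) (mcomp eta' xi').

Definition sup (X Y : simplex) (xi : smap X Y) : Arr C :=
  hom Y (xi ord_max) (sq Y).

Definition fib_obj (T : Ob C) (X : simplex) (f : Arr C) : Prop :=
  is_simplex X /\ dom f = sob X ord_max /\ cod f = T.

Definition fib_mor (T : Ob C) (X : simplex) (f : Arr C) (Y : simplex)
  (g : Arr C) (xi : smap X Y) : Prop :=
  is_mor xi /\ comp g (sup xi) = f.

(* r(X,f) = X_0 -> ... -> X_q -f-> T *)
Definition rsimp (T : Ob C) (X : simplex) (f : Arr C) : simplex :=
  @Simplex (sq X).+1
    (fun i : 'I_(sq X).+2 => if (i <= sq X)%N then obn X i else T)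
    (fun i : 'I_(sq X).+1 => if (i < sq X)%N then stn X i else f).

Definition rmap (T : Ob C) (X : simplex) (f : Arr C) (Y : simplex) (g : Arr C)
  (xi : smap X Y) : smap (rsimp T X f) (rsimp T Y g) :=
  [ffun j : 'I_(sq X).+2 =>
     if (insub (val j) : option 'I_(sq X).+1) is Some j'
     then widen_ord (leqnSn _) (xi j') else ord_max].

End Nerve.
Arguments fib_mor {C} T X f Y g xi.
Arguments fib_obj {C} T X f.

(* Main.v *)
From Pilot Require Import Defs.
From mathcomp Require Import all_boot.
From Stdlib Require Import FunctionalExtensionality.
From mathcomp Require Import zify.
Import Pilot.Defs.
Set Implicit Arguments. Unset Strict Implicit. Unset Printing Implicit Defensive.

Section S.
Variable C : category.
Implicit Types X Y Z : simplex C.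

Lemma obnE X (i : 'I_(sq X).+1) : obn X i = @sob _ X i.
Proof. by rewrite /obn valK. Qed.

Lemma stnE X (i : 'I_(sq X)) : stn X i = @sst _ X i.
Proof. by rewrite /stn valK. Qed.

Lemma stn_dom X : is_simplex X -> forall k, k < sq X ->
  dom (stn X k) = obn X k /\ cod (stn X k) = obn X k.+1.
Proof.
move=> HX k lt; have [H1 H2] := HX (Ordinal lt).
have -> : stn X k = stn X (Ordinal lt) by [].
by rewrite stnE H1 H2 -!obnE.
Qed.

Lemma homn_dom X : is_simplex X -> forall i n, i + n <= sq X ->
  dom (homn X i n) = obn X i /\ cod (homn X i n) = obn X (i + n).
Proof.
move=> HX i; elim=> [|n IH] le /=.
  by rewrite dom_id cod_id addn0.
have lt : i + n < sq X by lia.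
have [D1 D2] := IH (ltnW lt).
have [S1 S2] := stn_dom HX lt.
rewrite dom_comp ?cod_comp ?S2 ?addnS //; by rewrite D2 S1.
Qed.

Lemma homn_add X : is_simplex X -> forall i m n, i + m + n <= sq X ->
  homn X i (m + n) = comp (homn X (i + m) n) (homn X i m).
Proof.
move=> HX i m; elim=> [|n IH] le /=.
  rewrite addn0 in le.
  have [_ D2] := homn_dom HX le.
  by rewrite addn0 -D2 comp_id_l.
have lt : i + m + n < sq X by lia.
have le' := ltnW lt.
rewrite addnS /= IH // addnA.
have [D1 D2] := homn_dom HX (leq_trans (leq_addr n _) le' : i + m <= sq X).
have [E1 E2] := homn_dom HX (le' : (i + m) + n <= sq X).
have [S1 S2] := stn_dom HX (lt : i + m + n < sq X).
rewrite comp_assoc //; first by rewrite D2 E1.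
by rewrite E2 S1.
Qed.

Lemma hom_dom X : is_simplex X -> forall i j, i <= j -> j <= sq X ->
  dom (hom X i j) = obn X i /\ cod (hom X i j) = obn X j.
Proof.
move=> HX i j le lej; rewrite /hom.
have h : i + (j - i) <= sq X by rewrite subnKC.
by have := homn_dom HX h; rewrite subnKC.
Qed.

Lemma hom_trans X : is_simplex X -> forall i j k, i <= j -> j <= k -> k <= sq X ->
  hom X i k = comp (hom X j k) (hom X i j).
Proof.
move=> HX i j k le1 le2 le3; rewrite /hom.
have -> : k - i = (j - i) + (k - j) by lia.
rewrite homn_add ?subnKC //; try lia.
Qed.

Lemma hom_refl X i : hom X i i = idC (obn X i).
Proof. by rewrite /hom subnn. Qed.


Section Pre.
Variable X : simplex C.
Variable s : {ffun 'I_(sq X).+2 -> 'I_(sq X).+1}.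
Hypothesis HX : is_simplex X.
Hypothesis ms : monotone s.

Lemma inord_mono i j : i <= j -> j <= (sq X).+1 ->
  s (inord i) <= s (inord j).
Proof. move=> le lej; apply: ms; rewrite !inordK //; lia. Qed.

Lemma pre_obn k : k <= (sq X).+1 -> obn (precomp s) k = obn X (s (inord k)).
Proof.
move=> le; have E : k = (inord k : 'I_(sq X).+2) by rewrite inordK.
by rewrite {1}E (@obnE (precomp s)) /= obnE.
Qed.

Lemma pre_stn k : k < (sq X).+1 ->
  stn (precomp s) k = hom X (s (inord k)) (s (inord k.+1)).
Proof.
move=> le; have E : k = (inord k : 'I_(sq X).+1) by rewrite inordK.
rewrite {1}E (@stnE (precomp s)) /=.
have -> : widen_ord (leqnSn _) (inord k : 'I_(sq X).+1) = inord k
  by apply: val_inj; rewrite /= !inordK //; lia.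
have -> : lift ord0 (inord k : 'I_(sq X).+1) = inord k.+1
  by apply: val_inj; rewrite /= /bump /= !inordK //; lia.
by [].
Qed.

Lemma pre_homn i n : i + n <= (sq X).+1 ->
  homn (precomp s) i n = hom X (s (inord i)) (s (inord (i + n))).
Proof.
elim: n => [|n IH] le /=.
  by rewrite addn0 hom_refl pre_obn //; lia.
rewrite IH; last by lia.
rewrite pre_stn; last by lia.
rewrite -(hom_trans HX (i := s (inord i))) ?addnS //.
- by apply: inord_mono; lia.
- by apply: inord_mono; lia.
- by rewrite -ltnS ltn_ord.
Qed.

Lemma pre_hom i j : i <= j -> j <= (sq X).+1 ->
  hom (precomp s) i j = hom X (s (inord i)) (s (inord j)).
Proof. by move=> le lej; rewrite /hom pre_homn subnKC //; lia. Qed.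

Lemma pre_simplex : is_simplex (precomp s).
Proof.
move=> i /=.
have le : s (widen_ord (leqnSn _) i) <= s (lift ord0 i).
  by apply: ms; rewrite /= /bump /=; lia.
have [D1 D2] := hom_dom HX le (ltnSE (ltn_ord _)).
by rewrite D1 D2 !obnE.
Qed.

End Pre.

Section Rs.
Variables (T : Ob C) (X : simplex C) (f : Arr C).
Local Notation R := (rsimp T X f).

Lemma rs_obn k : k <= sq X -> obn R k = obn X k.
Proof.
move=> le; have E : k = (inord k : 'I_(sq X).+2) by rewrite inordK //; lia.
by rewrite {1}E (@obnE R) /= inordK ?le //; lia.
Qed.

Lemma rs_obnT : obn R (sq X).+1 = T.
Proof. by have := @obnE R ord_max; rewrite /= ltnn. Qed.

Lemma rs_stn k : k < sq X -> stn R k = stn X k.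
Proof.
move=> le; have E : k = (inord k : 'I_(sq X).+1) by rewrite inordK //; lia.
by rewrite {1}E (@stnE R) /= inordK ?le //; lia.
Qed.

Lemma rs_stnT : stn R (sq X) = f.
Proof. by have := @stnE R ord_max; rewrite /= ltnn. Qed.

Lemma rs_homn i n : i + n <= sq X -> homn R i n = homn X i n.
Proof.
elim: n => [|n IH] le /=; first by rewrite rs_obn //; lia.
by rewrite IH ?rs_stn //; lia.
Qed.

Lemma rs_hom i j : i <= j -> j <= sq X -> hom R i j = hom X i j.
Proof. by move=> le lej; rewrite /hom rs_homn //; lia. Qed.

Lemma rs_homT i : i <= sq X -> hom R i (sq X).+1 = comp f (hom X i (sq X)).
Proof.
move=> le; rewrite /hom subSn //= subnKC // rs_stnT rs_homn //; lia.
Qed.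

Lemma rs_homTT : hom R (sq X).+1 (sq X).+1 = idC T.
Proof. by rewrite hom_refl rs_obnT. Qed.

Lemma rs_simplex : is_simplex X -> dom f = @sob _ X ord_max -> cod f = T ->
  is_simplex R.
Proof.
move=> HX Df Cf i /=.
case: (ltnP i (sq X)) => h.
  have [D1 D2] := stn_dom HX h.
  by rewrite (ltnW h) D1 D2.
have Ei : (i : nat) = sq X.
  by apply/eqP; rewrite eqn_leq h andbT; exact: (ltn_ord i).
rewrite Ei leqnn Df Cf; split => //.
by rewrite -(@obnE X ord_max).
Qed.

End Rs.

Lemma rs_sob T X f (i : 'I_(sq (rsimp T X f)).+1) :
  @sob _ (rsimp T X f) i = if (i : nat) <= sq X then obn X i else T.
Proof. by []. Qed.

Lemma rmapV T X Y f g (xi : smap X Y) (j : 'I_(sq (rsimp T X f)).+1) :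
  (rmap T f g xi j : nat) = if j <= sq X then nat_of_ord (xi (inord j)) else (sq Y).+1.
Proof.
rewrite /rmap ffunE; case: insubP => [j' le E | nle] /=.
  have le' : j <= sq X := le; rewrite le'.
  by congr (nat_of_ord (xi _)); apply: val_inj; rewrite /= -E inordK // E.
have nle' : (j <= sq X) = false by apply: negbTE.
by rewrite nle'.
Qed.

Lemma rmap_mono T X Y f g (xi : smap X Y) : monotone xi -> monotone (rmap T f g xi).
Proof.
move=> m i j le; rewrite !rmapV.
case: ifP => hi; case: ifP => hj.
- by apply: m; rewrite !inordK.
- exact: ltnW (ltn_ord _).
- by move: (leq_trans le hj); rewrite hi.
- by [].
Qed.

Lemma sup_dom X Y (xi : smap X Y) : is_simplex Y -> is_mor xi ->
  dom (sup xi) = @sob _ X ord_max /\ cod (sup xi) = @sob _ Y ord_max.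
Proof.
move=> HY [m [Hs Hh]]; rewrite /sup.
have [D1 D2] := hom_dom HY (leq_ord (xi ord_max)) (leqnn _).
by rewrite D1 D2 obnE Hs -(@obnE Y ord_max).
Qed.

Lemma mor_mcomp X Y Z (xi : smap X Y) (eta : smap Y Z) :
  is_mor xi -> is_mor eta -> is_mor (mcomp eta xi).
Proof.
move=> [m [Hs Hh]] [m' [Hs' Hh']]; split; [|split].
- by move=> i j le; rewrite !ffunE; apply: m'; apply: m.
- by move=> i; rewrite ffunE Hs'.
- by move=> i j le; rewrite !ffunE Hh' ?Hh //; apply: m.
Qed.

Lemma sup_mcomp X Y Z (xi : smap X Y) (eta : smap Y Z) :
  is_simplex Z -> is_mor xi -> is_mor eta ->
  sup (mcomp eta xi) = comp (sup eta) (sup xi).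
Proof.
move=> HZ Mx Me; have [m [Hs Hh]] := Mx; have [m' [Hs' Hh']] := Me.
rewrite /sup ffunE (hom_trans HZ (j := eta ord_max)) //.
- by rewrite Hh' //; apply: leq_ord.
- by apply: m'; apply: leq_ord.
- exact: leq_ord.
Qed.

Lemma rmap_mor T X Y f g (xi : smap X Y) :
  is_simplex X -> is_simplex Y -> is_mor xi ->
  dom g = @sob _ Y ord_max -> cod g = T -> comp g (sup xi) = f ->
  is_mor (rmap T f g xi).
Proof.
move=> HX HY Mx Dg Cg Ef; have [m [Hs Hh]] := Mx.
split; [exact: rmap_mono|split].
- move=> j; rewrite !rs_sob !rmapV; case: (leqP j (sq X)) => hj.
    by rewrite leq_ord (@obnE Y (xi (inord j))) Hs -(@obnE X (inord j)) inordK.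
  by rewrite ltnn.
- move=> i j le; rewrite !rmapV.
  case: (leqP j (sq X)) => hj; case: (leqP i (sq X)) => hi.
  + have mij : xi (inord i) <= xi (inord j) by apply: m; rewrite !inordK.
    rewrite (rs_hom _ _ mij (leq_ord _)) (rs_hom _ _ le hj).
    by rewrite Hh ?inordK.
  + by move: (leq_trans hi (leq_trans le hj)); rewrite ltnn.
  + have Ej : (j : nat) = (sq X).+1 by apply/eqP; rewrite eqn_leq hj andbT; exact: (ltn_ord j).
    rewrite Ej (rs_homT _ _ hi) (rs_homT _ _ (leq_ord (xi (inord i)))) -Ef /sup.
    have -> : hom X i (sq X) = hom X (inord i : 'I_(sq X).+1) (@ord_max (sq X))
      by rewrite inordK.
    have mi : xi (inord i) <= xi ord_max by apply: m; apply: leq_ord.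
    rewrite -Hh ?leq_ord // -comp_assoc.
    * by rewrite -(hom_trans HY mi) ?leq_ord.
    * have [_ D2] := hom_dom HY mi (leq_ord _).
      by have [D1 _] := hom_dom HY (leq_ord (xi ord_max)) (leqnn _); rewrite D1 D2.
    * have [_ D2] := hom_dom HY (leq_ord (xi ord_max)) (leqnn _).
      by rewrite D2 Dg -(@obnE Y ord_max).
  + have Ej' : (j : nat) = (sq X).+1 by apply/eqP; rewrite eqn_leq hj andbT; exact: (ltn_ord j).
    have Ei : (i : nat) = (sq X).+1 by apply/eqP; rewrite eqn_leq hi andbT; exact: (ltn_ord i).
    by rewrite Ei Ej' !rs_homTT.
Qed.

Lemma sim_cast (A R P : simplex C) (E : R = P) (a b : smap A R) (a' b' : smap A P) :
  (forall i, val (a i) = val (a' i)) -> (forall i, val (b i) = val (b' i)) ->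
  sim a' b' -> sim a b.
Proof.
subst P => Ha Hb.
have -> : a = a' by apply/ffunP => i; apply: val_inj.
by have -> : b = b' by apply/ffunP => i; apply: val_inj.
Qed.

Lemma mk_eq n (a a' : 'I_n.+1 -> Ob C) (b b' : 'I_n -> Arr C) :
  (forall i, a i = a' i) -> (forall i, b i = b' i) -> Simplex a b = Simplex a' b'.
Proof.
move=> ha hb; have -> : a = a' by apply: functional_extensionality.
by have -> : b = b' by apply: functional_extensionality.
Qed.

Section Elem.
Variables (T : Ob C) (X : simplex C).
Variable s : {ffun 'I_(sq X).+2 -> 'I_(sq X).+1}.
Hypothesis HX : is_simplex X.
Hypothesis ms : monotone s.
Hypothesis ss : forall j, exists i, s i = j.
Local Notation P := (precomp s).

Lemma smax e : (forall j, s (e j) = j) -> s ord_max = ord_max.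
Proof.
move=> se; apply: val_inj; apply/eqP; rewrite /= eqn_leq leq_ord /=.
have := ms (leq_ord (e ord_max) : e ord_max <= (ord_max : 'I_(sq X).+2)); rewrite se => h.
exact: h.
Qed.

Lemma sup_e (e : smap X P) : (forall j, s (e j) = j) -> sup e = idC (obn X (sq X)).
Proof.
move=> se; rewrite /sup pre_hom //; last exact: leq_ord.
have -> : inord (e ord_max) = e ord_max :> 'I_(sq X).+2 by rewrite inord_val.
have -> : inord (sq P) = ord_max :> 'I_(sq X).+2 by apply: val_inj; rewrite /= inordK.
by rewrite se (smax se) hom_refl.
Qed.

Lemma mor_e (e : smap X P) : monotone e -> (forall j, s (e j) = j) -> is_mor e.
Proof.
move=> me se; split => //; split.
- by move=> i /=; rewrite se.
- move=> i j le; rewrite pre_hom //; [|exact: me|exact: leq_ord].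
  by rewrite !inord_val !se.
Qed.

Lemma elem_rmap (d d' : smap X P) (g : Arr C) :
  monotone d -> monotone d' -> (forall j, s (d j) = j) -> (forall j, s (d' j) = j) ->
  dom g = @sob _ P ord_max -> cod g = T -> sim (rmap T g g d) (rmap T g g d').
Proof.
move=> md md' sd sd' Dg Cg.
have sm := smax sd.
have Dg' : dom g = @sob _ X ord_max by rewrite Dg /= sm.
pose sp := @rmap C T P g X g s.
pose RX := rsimp T X g.
pose P' := @precomp C RX sp.
have E : rsimp T P g = P'.
  apply: mk_eq => i; rewrite /sp /RX.
    rewrite rs_sob (@rmapV T P X g g s).
    case: (leqP i (sq P)) => hi.
      by rewrite leq_ord pre_obn.
    by rewrite ltnn.
  case: (ltnP i (sq P)) => hi.
    have hi' : i < (sq X).+1 := hi.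
    rewrite (@rmapV T P X g g s) (@rmapV T P X g g s) !ifT /bump /= ?add1n.
    - rewrite pre_stn // rs_hom //; last exact: leq_ord.
      by apply: ms; rewrite /= !inordK //; lia.
    - by [].
    - exact: ltnW.
  have Ei : (i : nat) = (sq X).+1.
    by apply/eqP; rewrite eqn_leq hi andbT; exact: (ltn_ord i).
  rewrite (@rmapV T P X g g s) (@rmapV T P X g g s) /= /bump /= add1n Ei leqnn ltnn.
  have -> : inord (sq X).+1 = ord_max :> 'I_(sq X).+2 by apply: val_inj; rewrite /= inordK.
  rewrite sm /= rs_homT // hom_refl.
  have -> : obn X (sq X) = dom g by rewrite Dg' -(@obnE X ord_max).
  by rewrite comp_id_r.
apply: (@sim_cast RX _ _ E _ _ (rmap T g g d : smap RX P') (rmap T g g d' : smap RX P')) => //.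
have spd : forall e : smap X P, (forall j, s (e j) = j) ->
  forall j : 'I_(sq RX).+1, sp (rmap T g g e j : 'I_(sq P').+1) = j.
  move=> e se j; apply: ord_inj.
  rewrite /sp (@rmapV T P X g g s) (@rmapV T X P g g e).
  case: (leqP j (sq X)) => hj.
    by rewrite leq_ord inord_val se inordK.
  rewrite ltnn.
  by apply/eqP; rewrite eqn_leq hj /=; exact: (ltn_ord j).
apply: sim_elem.
- exact: rs_simplex HX Dg' Cg.
- exact: (@rmap_mono T P X g g s ms).
- move=> j; case: (leqP j (sq X)) => hj.
    have [i0 Hi0] := ss (inord j).
    exists (widen_ord (leqnSn _) i0); apply: ord_inj.
    rewrite (@rmapV T P X g g s) /= ifT ?inord_val ?Hi0 ?inordK //; exact: leq_ord.
  exists ord_max; apply: ord_inj.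
  rewrite (@rmapV T P X g g s) /= ltnn.
  by apply/eqP; rewrite eqn_leq hj /=; exact: (ltn_ord j).
- exact: (@rmap_mono T X P g g d md).
- exact: (@rmap_mono T X P g g d' md').
- exact: spd sd.
- exact: spd sd'.
Qed.

End Elem.

Lemma rmap_mcomp T X Y Z f h g (xi : smap X Y) (eta : smap Y Z) :
  rmap T f g (mcomp eta xi) = mcomp (rmap T h g eta) (rmap T f h xi).
Proof.
apply/ffunP => j; apply: ord_inj.
rewrite [in RHS]ffunE (@rmapV T X Z f g) (@rmapV T Y Z h g) (@rmapV T X Y f h).
case: (leqP j (sq X)) => hj.
  by rewrite leq_ord inord_val ffunE.
by rewrite ltnn.
Qed.

Lemma main T : forall X Y (xi xi' : smap X Y), sim xi xi' ->
 [/\ is_simplex X, is_simplex Y, is_mor xi, is_mor xi' & sup xi = sup xi' /\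
   forall f g, dom g = @sob _ Y ord_max -> cod g = T -> comp g (sup xi) = f ->
   sim (rmap T f g xi) (rmap T f g xi')].
Proof.
move=> X Y xi xi'; elim => {X Y xi xi'}.
- move=> X s d d' HX ms ss md md' sd sd'.
  have HP := pre_simplex HX ms.
  have Md := mor_e HX ms md sd; have Md' := mor_e HX ms md' sd'.
  split => //; split.
    by rewrite (sup_e HX ms sd) (sup_e HX ms sd').
  move=> f g Dg Cg Ef.
  have Efg : f = g.
    rewrite -Ef (sup_e HX ms sd).
    have -> : obn X (sq X) = dom g.
      by rewrite Dg /= (smax ms sd) -(@obnE X ord_max).
    by rewrite comp_id_r.
  rewrite Efg. have := elem_rmap HX ms ss md md' sd sd'.
  move=> H; apply: H => //.
- move=> X Y xi HX HY M; split => //; split => // f g Dg Cg Ef.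
  have [Dx Cx] := sup_dom HY M.
  apply: sim_refl.
  + apply: rs_simplex => //; rewrite -Ef ?cod_comp ?dom_comp //; by rewrite Cx Dg.
  + exact: rs_simplex.
  + exact: rmap_mor.
- move=> X Y xi xi' _ [HX HY M M' [Es IH]]; split => //; split => // f g Dg Cg Ef.
  by apply: sim_sym; apply: (IH f g Dg Cg); rewrite Es.
- move=> X Y xi xi' xi'' _ [HX HY M M' [E1 IH1]] _ [_ _ _ M'' [E2 IH2]].
  split => //; split; first by rewrite E1 E2.
  move=> f g Dg Cg Ef.
  apply: sim_trans (IH1 _ _ Dg Cg Ef) (IH2 _ _ Dg Cg _).
  by rewrite -E1.
- move=> X Y Z xi xi' eta eta' _ [HX HY Mx Mx' [Ex IHx]] _ [_ HZ Me Me' [Ee IHe]].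
  split => //; try exact: mor_mcomp; split.
    by rewrite !sup_mcomp // Ex Ee.
  move=> f g Dg Cg Ef.
  have [De Ce] := sup_dom HZ Me.
  have [Dx Cx] := sup_dom HY Mx.
  have Dh : dom (comp g (sup eta)) = @sob _ Y ord_max by rewrite dom_comp // Ce Dg.
  have Ch : cod (comp g (sup eta)) = T by rewrite cod_comp // Ce Dg.
  have Eh : comp (comp g (sup eta)) (sup xi) = f.
    by rewrite -Ef sup_mcomp // comp_assoc // ?Cx ?De ?Ce ?Dg.
  rewrite (rmap_mcomp T f (comp g (sup eta)) g xi eta).
  rewrite (rmap_mcomp T f (comp g (sup eta)) g xi' eta').
  apply: sim_comp; [exact: IHx Dh Ch Eh | exact: IHe Dg Cg erefl].
Qed.

End S.

Theorem lemma30 (C : category) (T : Ob C) (X Y : simplex C) (f g : Arr C)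
  (xi xi' : smap X Y) :
  fib_obj T X f -> fib_obj T Y g ->
  fib_mor T X f Y g xi -> fib_mor T X f Y g xi' ->
  sim xi xi' ->
  sim (rmap T f g xi) (rmap T f g xi').
Proof.
move=> [HX [Dx Cx]] [HY [Dy Cy]] [Mx Ex] [Mx' Ex'] H.
have [_ _ _ _ [_ IH]] := main T H.
exact: IH Dy Cy Ex.
Qed.
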